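(* Let $N>0$, $m>0$, $F>0$, $\alpha>0$, $w>0$ be fixed with $Nm>\alpha$, and for $g\geq 0$, $\tau\in(0,1)$, $L_g\geq 0$ define \[ L=\frac{N\left[(1-\tau)(mL_g+\alpha F)+(mg+F)mN\right]}{\alpha+(Nm-\alpha)\tau},\qquad q=\frac{(1-\tau)(L+L_g-\alpha g)}{\left(Nm+\alpha(1-\tau)\right)(L+L_g)}, \] \[ p=\frac{L+L_g}{L+L_g-\alpha g}\left(mw+\frac{\alpha(1-\tau)w}{N}\right),\qquad \Pi=\left((L+L_g)q+g\right)(p-mw)-Fw, \] regarded as functions of $(g,\tau,L_g)$. If $\alpha>1-\tau$, then \[ \frac{\partial \Pi}{\partial g}>\frac{\partial \Pi}{\partial L_g}. \]
   Context: These are the symmetric-equilibrium private employment $L$, per-capita consumption $q$ of each variety, price $p$, and profit $\Pi$ of each firm in a monopolistic-competition general equilibrium model with a measure $N$ of firms, marginal and fixed labor inputs $m$ and $F$, CARA utility parameter $\alpha$, nominal wage $w$, income tax rate $\tau$, government purchase $g$ of each variety, and government employment $L_g$. Partial derivatives are taken in $(g,\tau,L_g)$ with other parameters fixed. *)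

(* Defs.v *)
From Stdlib Require Import Reals.
From Coquelicot Require Import Coquelicot.
Open Scope R_scope.

Definition Lpriv (N m F alpha : R) (g tau Lg : R) : R :=
  N * ((1 - tau) * (m * Lg + alpha * F) + (m * g + F) * m * N)
  / (alpha + (N * m - alpha) * tau).

Definition qcons (N m F alpha : R) (g tau Lg : R) : R :=
  let L := Lpriv N m F alpha g tau Lg in
  (1 - tau) * (L + Lg - alpha * g)
  / ((N * m + alpha * (1 - tau)) * (L + Lg)).

Definition price (N m F alpha w : R) (g tau Lg : R) : R :=
  let L := Lpriv N m F alpha g tau Lg in
  (L + Lg) / (L + Lg - alpha * g) * (m * w + alpha * (1 - tau) * w / N).

Definition profit (N m F alpha w : R) (g tau Lg : R) : R :=
  let L := Lpriv N m F alpha g tau Lg in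
  ((L + Lg) * qcons N m F alpha g tau Lg + g)
    * (price N m F alpha w g tau Lg - m * w) - F * w.

(* Main.v *)
Require Import Defs.
From Stdlib Require Import Reals Lra.
From Coquelicot Require Import Coquelicot.
Open Scope R_scope.
Definition Csf (u A P : R) := u*(P*P - P - A*u) + (2*P + u*A)*(A*u + P*(1-u)).
Definition Cgf (u A P : R) := (2*A*u+P)*(P*P - P - A*u) + A*P*(A*u + P*(1-u)).

Ltac pos_tac := repeat (apply Rplus_le_le_0_compat || apply Rmult_le_pos || apply pow_le); lra.

Lemma Cs_pos u A P : 0 < u < 1 -> u < A -> A < P -> 0 < Csf u A P.
Proof.
  intros Hu HA HP. unfold Csf.
  assert (Ha : 0 < A - u) by lra. assert (Hb : 0 < P - A) by lra.
  set (a := A - u) in *. set (b := P - A) in *.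
  replace P with (u + a + b) by (unfold a, b; ring).
  replace A with (u + a) by (unfold a; ring).
  clearbody a b.
  assert (E : forall x y z : R, z > 0 -> x >= 0 -> y >= 0 -> x + y + z > 0) by (intros; lra).
  replace (u * ((u + a + b) * (u + a + b) - (u + a + b) - (u + a) * u) +
   (2 * (u + a + b) + u * (u + a)) * ((u + a) * u + (u + a + b) * (1 - u)))
   with ((2*(a^2) + 3*(u*a) + 1*(u*a*b) + 2*(u*a^2) + 1*(u^2) + 1*(u^2*b) + 3*(u^2*a) + 1*(u^3)) + b^2*(2-u) + a*b*(4-u^2) + u*b*(3-u^2)) by ring.
  assert (0 < u^2) by (apply pow_lt; lra).
  assert (0 <= b^2*(2-u)) by (apply Rmult_le_pos; [pos_tac| lra]).
  assert (0 <= a*b*(4-u^2)) by (apply Rmult_le_pos; [pos_tac| nra]).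
  assert (0 <= u*b*(3-u^2)) by (apply Rmult_le_pos; [pos_tac| nra]).
  assert (0 <= 2*(a^2) + 3*(u*a) + 1*(u*a*b) + 2*(u*a^2) + 1*(u^2*b) + 3*(u^2*a) + 1*(u^3)) by pos_tac.
  lra.
Qed.

Lemma G_nonneg u A P : 0 < u < 1 -> u < A -> A < P ->
  0 <= P^2 * Csf u A P - (A*u + P*(1-u)) * Cgf u A P.
Proof.
  intros Hu HA HP. unfold Csf, Cgf.
  assert (Ha : 0 < A - u) by lra. assert (Hb : 0 < P - A) by lra.
  set (a := A - u) in *. set (b := P - A) in *.
  replace P with (u + a + b) by (unfold a, b; ring).
  replace A with (u + a) by (unfold a; ring).
  clearbody a b.
  match goal with |- 0 <= ?e => replace e with
   ((1*(b^3) + 1*(b^4) + 3*(a*b^2) + 3*(a*b^3) + 3*(a^2*b) + 3*(a^2*b^2) + 1*(a^3) + 1*(a^3*b) + 3*(u*b^2) + 1*(u*b^3) + 6*(u*a*b) + 4*(u*a*b^2) + 2*(u*a*b^3) + 3*(u*a^2) + 5*(u*a^2*b) + 4*(u*a^2*b^2) + 2*(u*a^3) + 2*(u*a^3*b) + 3*(u^2*b) + 1*(u^2*b^2) + 2*(u^2*b^3) + 3*(u^2*a) + 4*(u^2*a*b^2) + 6*(u^2*a^2) + 3*(u^2*a^2*b) + 1*(u^2*a^2*b^2) + 1*(u^2*a^3) + 1*(u^2*a^3*b) + 1*(u^3) + 6*(u^3*a) + 2*(u^3*a*b^2) + 3*(u^3*a^2) + 1*(u^3*a^2*b) + 2*(u^4)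 + 1*(u^4*b^2) + 3*(u^4*a) + 1*(u^5)) + u^3*b*(3-u-u^2) + u^2*a*b*(7-u^2)) by ring end.
  assert (0 <= u^3*b*(3-u-u^2)) by (apply Rmult_le_pos; [pos_tac| nra]).
  assert (0 <= u^2*a*b*(7-u^2)) by (apply Rmult_le_pos; [pos_tac| nra]).
  assert (0 <= 1*(b^3) + 1*(b^4) + 3*(a*b^2) + 3*(a*b^3) + 3*(a^2*b) + 3*(a^2*b^2) + 1*(a^3) + 1*(a^3*b) + 3*(u*b^2) + 1*(u*b^3) + 6*(u*a*b) + 4*(u*a*b^2) + 2*(u*a*b^3) + 3*(u*a^2) + 5*(u*a^2*b) + 4*(u*a^2*b^2) + 2*(u*a^3) + 2*(u*a^3*b) + 3*(u^2*b) + 1*(u^2*b^2) + 2*(u^2*b^3) + 3*(u^2*a) + 4*(u^2*a*b^2) + 6*(u^2*a^2) + 3*(u^2*a^2*b) + 1*(u^2*a^2*b^2) + 1*(u^2*a^3) + 1*(u^2*a^3*b) + 1*(u^3) + 6*(u^3*a) + 2*(u^3*a*b^2) + 3*(u^3*a^2) + 1*(u^3*a^2*b) + 2*(u^4) + 1*(u^4*b^2) + 3*(u^4*a) + 1*(u^5)) by pos_tac.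
  lra.
Qed.
Lemma dg N m F alpha w g tau Lg :
  N <> 0 -> alpha + (N * m - alpha) * tau <> 0 ->
  N * m + alpha * (1 - tau) <> 0 ->
  Lpriv N m F alpha g tau Lg + Lg <> 0 ->
  Lpriv N m F alpha g tau Lg + Lg - alpha * g <> 0 ->
  let S := Lpriv N m F alpha g tau Lg + Lg in
  let D := alpha + (N * m - alpha) * tau in
  let X := (1 - tau) * S + N * m * g in
  let Y := S - alpha * g in
  let a := N * m * N * m / D in
  Derive (fun x => profit N m F alpha w x tau Lg) g =
  w * alpha / (N * (N * m + alpha * (1 - tau))) *
   (2 * X * ((1 - tau) * a + N * m) * Y - X ^ 2 * (a - alpha)) / Y ^ 2.
Proof.
intros HN HD HK HS HY S D X Y a.
apply is_derive_unique. unfold profit, qcons, price.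
revert HS HY; cbv zeta. unfold Lpriv. cbv zeta.
intros HS HY. subst S D X Y a. unfold Lpriv.
auto_derive.
{ unfold Rdiv, Rminus in *. repeat split; auto. }
  set (D := alpha + (N * m - alpha) * tau) in *.
  unfold Rdiv in *.
  set (L := N * ((1 - tau) * (m * Lg + alpha * F) + (m * g + F) * m * N) * / D) in *.
  replace (N * (m * 1 * m * N) * / D) with (N * m * N * m * / D) by (field; auto).
  set (a := N * m * N * m * / D) in *.
  unfold Rminus in *.
  match goal with |- ?x = ?y => change (x = y :> R) end.
  field. repeat split; auto.
Qed.

Lemma dL N m F alpha w g tau Lg :
  N <> 0 -> alpha + (N * m - alpha) * tau <> 0 ->
  N * m + alpha * (1 - tau) <> 0 ->
  Lpriv N m F alpha g tau Lg + Lg <> 0 ->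
  Lpriv N m F alpha g tau Lg + Lg - alpha * g <> 0 ->
  let S := Lpriv N m F alpha g tau Lg + Lg in
  let D := alpha + (N * m - alpha) * tau in
  let X := (1 - tau) * S + N * m * g in
  let Y := S - alpha * g in
  let b := 1 + N * m * (1 - tau) / D in
  Derive (fun x => profit N m F alpha w g tau x) Lg =
  w * alpha / (N * (N * m + alpha * (1 - tau))) *
   (2 * X * ((1 - tau) * b) * Y - X ^ 2 * b) / Y ^ 2.
Proof.
intros HN HD HK HS HY S D X Y b.
apply is_derive_unique. unfold profit, qcons, price.
revert HS HY; cbv zeta. unfold Lpriv. cbv zeta.
intros HS HY. subst S D X Y b. unfold Lpriv.
auto_derive.
{ unfold Rdiv, Rminus in *. repeat split; auto. }
  set (D := alpha + (N * m - alpha) * tau) in *.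
  unfold Rdiv in *.
  set (L := N * ((1 - tau) * (m * Lg + alpha * F) + (m * g + F) * m * N) * / D) in *.

  unfold Rminus in *.
  match goal with |- ?x = ?y => change (x = y :> R) end.
  field. repeat split; auto.
Qed.

Lemma key (N m F alpha w g tau Lg SS : R) :
  0 < N -> 0 < m -> 0 < F -> 0 < alpha -> 0 < w -> N * m > alpha ->
  0 <= g -> 0 < tau < 1 -> 0 <= Lg -> alpha > 1 - tau ->
  (alpha + (N * m - alpha) * tau) * SS =
    Lg * ((1 - tau) * (N * m) + (alpha + (N * m - alpha) * tau))
    + N * F * ((1 - tau) * alpha + N * m) + (N * m) ^ 2 * g ->
  0 < SS - alpha * g ->
  let D := alpha + (N * m - alpha) * tau in
  let X := (1 - tau) * SS + N * m * g in
  let Y := SS - alpha * g in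
  let a := N * m * N * m / D in
  let b := 1 + N * m * (1 - tau) / D in
  w * alpha / (N * (N * m + alpha * (1 - tau))) *
   (2 * X * ((1 - tau) * a + N * m) * Y - X ^ 2 * (a - alpha)) / Y ^ 2 >
  w * alpha / (N * (N * m + alpha * (1 - tau))) *
   (2 * X * ((1 - tau) * b) * Y - X ^ 2 * b) / Y ^ 2.
Proof.
  intros HN Hm HF Ha Hw HP Hg Ht HLg Hat HSd HY D X Y a b.
  assert (HD : 0 < D) by (unfold D; nra).
  assert (HS0 : 0 < SS) by nra.
  assert (HX : 0 < X).
  { unfold X. assert (0 < (1 - tau) * SS) by (apply Rmult_lt_0_compat; lra).
    assert (0 <= N * m * g) by (apply Rmult_le_pos; [nra| lra]). lra. }
  assert (Hc : 0 < w * alpha / (N * (N * m + alpha * (1 - tau)))).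
  { apply Rdiv_lt_0_compat; [nra|]. apply Rmult_lt_0_compat; nra. }
  assert (HY2 : 0 < / Y ^ 2) by (apply Rinv_0_lt_compat; apply pow_lt; unfold Y; lra).
  unfold Rdiv at 2 4. apply Rmult_lt_compat_r; [exact HY2|].
  apply Rmult_lt_compat_l; [exact Hc|].
  set (u := 1 - tau) in *. set (P := N * m) in *.
  assert (HDe : D = alpha * u + P * (1 - u)) by (unfold D, u; ring).
  assert (Eq : (2 * X * (u * a + P) * Y - X ^ 2 * (a - alpha)) -
               (2 * X * (u * b) * Y - X ^ 2 * b)
          = X * (SS * Csf u alpha P - g * Cgf u alpha P) / D).
  { unfold a, b, X, Y, Csf, Cgf. replace (P * N * m) with (P * P) by (unfold P; ring). rewrite HDe in HD |- *. clear -HD. clearbody P u. field. lra. }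
  assert (Hcs := Cs_pos u alpha P ltac:(unfold u; lra) ltac:(lra) ltac:(lra)).
  assert (HG := G_nonneg u alpha P ltac:(unfold u; lra) ltac:(lra) ltac:(lra)).
  rewrite <- HDe in HG.
  assert (HE : 0 < SS * Csf u alpha P - g * Cgf u alpha P).
  { assert (Hpos : 0 < D * SS - P ^ 2 * g).
    { assert (HSd' : D * SS = Lg * (u * P + D) + N * F * (u * alpha + P) + P ^ 2 * g) by exact HSd.
      rewrite HSd'. assert (0 < N * F * (u * alpha + P)) by (apply Rmult_lt_0_compat; [nra| unfold u in *; nra]).
      assert (0 <= Lg * (u * P + D)) by (apply Rmult_le_pos; [lra| unfold u in *; nra]).
      lra. }
    assert (0 < D * (SS * Csf u alpha P - g * Cgf u alpha P)).
    { replace (D * (SS * Csf u alpha P - g * Cgf u alpha P)) with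
        ((D * SS - P ^ 2 * g) * Csf u alpha P + g * (P ^ 2 * Csf u alpha P - D * Cgf u alpha P)) by ring.
      assert (0 < (D * SS - P ^ 2 * g) * Csf u alpha P) by (apply Rmult_lt_0_compat; lra).
      assert (0 <= g * (P ^ 2 * Csf u alpha P - D * Cgf u alpha P)) by (apply Rmult_le_pos; lra).
      lra. }
    nra. }
  assert (0 < X * (SS * Csf u alpha P - g * Cgf u alpha P) / D).
  { apply Rdiv_lt_0_compat; [apply Rmult_lt_0_compat|]; lra. }
  lra.
Qed.

Theorem theorem6 (N m F alpha w g tau Lg : R) :
  0 < N -> 0 < m -> 0 < F -> 0 < alpha -> 0 < w -> N * m > alpha ->
  0 <= g -> 0 < tau < 1 -> 0 <= Lg ->
  0 < Lpriv N m F alpha g tau Lg + Lg - alpha * g ->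
  alpha > 1 - tau ->
  Derive (fun x => profit N m F alpha w x tau Lg) g >
  Derive (fun x => profit N m F alpha w g tau x) Lg.
Proof.
  intros HN Hm HF Ha Hw HP Hg Ht HLg HY Hat.
  assert (HD : 0 < alpha + (N * m - alpha) * tau) by nra.
  assert (HK : 0 < N * m + alpha * (1 - tau)) by nra.
  assert (HS : 0 < Lpriv N m F alpha g tau Lg + Lg) by nra.
  rewrite dg, dL; try lra; try (apply Rgt_not_eq; lra).
  apply (key N m F alpha w g tau Lg); try lra.
  unfold Lpriv. field. lra.
Qed.
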